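(* For real $p$, the inequalities $$\left( \frac{\sinh x}{x}\right) ^{2p}+\left( \frac{\tanh x}{x}\right)^{p}>\left( \frac{x}{\sinh x}\right) ^{2p}+\left( \frac{x}{\tanh x}\right)^{p}>2$$ hold for all $x\in(0,\infty)$ if and only if $p\geq 3/5$. *)

(* Defs.v *)
From Stdlib Require Import Reals.
Open Scope R_scope.

(* Main.v *)
Require Import Defs.
From Stdlib Require Import Reals Lra Lia Psatz ZArith List.
Import ListNotations.
From Coquelicot Require Import Coquelicot.
Open Scope R_scope.
Open Scope bool_scope.

Definition term := (Z * nat * nat)%type.
Fixpoint Hval (L : list term) (x : R) : R :=
  match L with nil => 0 | (a,j,k)::L' => IZR a * x^j * (exp x)^k + Hval L' x end.
Definition tcoefR (t:term) (n:nat) : R :=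
  let '(a,j,k) := t in if Nat.leb j n then IZR a * INR k ^ (n-j) / INR (fact (n-j)) else 0.
Fixpoint hcoef (L : list term) (n : nat) : R :=
  match L with nil => 0 | t::L' => tcoefR t n + hcoef L' n end.

Lemma exp_pow_INR k x : exp (INR k * x) = exp x ^ k.
Proof.
  induction k. simpl. rewrite Rmult_0_l; apply exp_0.
  rewrite S_INR. simpl pow. rewrite <- IHk, <- exp_plus. f_equal. ring.
Qed.

Lemma term_series (t : term) x :
  is_series (fun n => tcoefR t n * x^n) (let '(a,j,k) := t in IZR a * x^j * (exp x)^k).
Proof.
  destruct t as [[a j] k].
  assert (H1 : is_pseries (fun n => INR k ^ n / INR (fact n)) x (exp (INR k * x))).
  { pose proof (is_exp_Reals (INR k * x)) as H. unfold is_pseries in *.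
    eapply is_series_ext; [|exact H]. intros n.
    unfold scal; simpl; unfold mult; simpl. rewrite (pow_n_pow (INR k * x)), (pow_n_pow x).
    rewrite Rpow_mult_distr. unfold Rdiv. ring. }
  apply (is_pseries_incr_n _ j) in H1.
  apply (is_pseries_scal (IZR a)) in H1.
  unfold is_pseries in H1. rewrite exp_pow_INR in H1.
  eapply is_series_ext; [|
  replace (IZR a * x ^ j * exp x ^ k) with (scal (IZR a) (scal (pow_n x j) (exp x ^ k)));
  [exact H1|]].
  - intros n. unfold PS_scal. rewrite PS_incr_n_simplify. unfold tcoefR.
    unfold scal; simpl; unfold mult; simpl. rewrite (pow_n_pow x).
    destruct (Compare_dec.le_lt_dec j n) as [Hl|Hl].
    + rewrite (proj2 (Nat.leb_le j n) Hl). unfold Rdiv; ring.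
    + rewrite (proj2 (Nat.leb_gt j n) Hl). unfold zero; simpl. unfold Rdiv; ring.
  - unfold scal; simpl; unfold mult; simpl. rewrite (pow_n_pow x). ring.
  - unfold mult; simpl. apply Rmult_comm.
Qed.

Lemma H_series (L : list term) x : is_series (fun n => hcoef L n * x^n) (Hval L x).
Proof.
  induction L as [|t L IH]; simpl.
  - pose proof (term_series (0%Z,0%nat,0%nat) x) as H0. cbv beta iota in H0.
    rewrite !Rmult_0_l in H0.
    eapply is_series_ext; [|exact H0]. intros n. unfold tcoefR.
    destruct (Nat.leb 0 n); simpl; unfold Rdiv; ring.
  - pose proof (term_series t x) as Ht. destruct t as [[a j] k].
    pose proof (is_series_plus _ _ _ _ Ht IH) as H.
    eapply is_series_ext; [|exact H]. intros n; simpl. change plus with Rplus. ring.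
Qed.
Fixpoint zp (z : Z) (n : nat) : Z := match n with O => 1%Z | S m => (z * zp z m)%Z end.
Fixpoint ffZ (n j : nat) : Z := match j with O => 1%Z | S j' => (ffZ n j' * (Z.of_nat n - Z.of_nat j'))%Z end.
Definition tcoefZ (t:term) (n:nat) : Z :=
  let '(a,j,k) := t in if Nat.leb j n then (a * zp (Z.of_nat k) (n-j) * ffZ n j)%Z else 0%Z.
Fixpoint zc (L : list term) (n : nat) : Z :=
  match L with nil => 0%Z | t::L' => (tcoefZ t n + zc L' n)%Z end.

Lemma zp_IZR z n : IZR (zp z n) = IZR z ^ n.
Proof. induction n; simpl; [reflexivity|]. rewrite mult_IZR, IHn. reflexivity. Qed.

Lemma fact_ffZ n j : (j <= n)%nat -> INR (fact n) = IZR (ffZ n j) * INR (fact (n - j)).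
Proof.
  induction j; intros Hj.
  - simpl. rewrite Nat.sub_0_r. ring.
  - rewrite IHj by lia. simpl ffZ. rewrite mult_IZR, minus_IZR, <- !INR_IZR_INZ.
    replace (n - j)%nat with (S (n - S j)) by lia. rewrite fact_simpl, mult_INR.
    replace (INR (S (n - S j))) with (INR n - INR j).
    + ring.
    + rewrite S_INR, minus_INR by lia. rewrite S_INR. ring.
Qed.

Lemma tcoef_eq t n : tcoefR t n * INR (fact n) = IZR (tcoefZ t n).
Proof.
  destruct t as [[a j] k]. unfold tcoefR, tcoefZ.
  destruct (Nat.leb j n) eqn:E.
  - apply Nat.leb_le in E. rewrite (fact_ffZ n j E), !mult_IZR, zp_IZR, <- INR_IZR_INZ.
    field. apply INR_fact_neq_0.
  - ring.
Qed.

Lemma hcoef_eq L n : hcoef L n * INR (fact n) = IZR (zc L n).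
Proof.
  induction L as [|t L IH]; simpl. ring.
  rewrite plus_IZR, <- IH, <- tcoef_eq. ring.
Qed.

Lemma hcoef_nonneg L n : (0 <= zc L n)%Z -> 0 <= hcoef L n.
Proof.
  intros H. apply IZR_le in H. rewrite <- hcoef_eq in H.
  pose proof (INR_fact_lt_0 n).
  apply Rmult_le_reg_r with (INR (fact n)); lra.
Qed.

Lemma hcoef_pos L n : (0 < zc L n)%Z -> 0 < hcoef L n.
Proof.
  intros H. apply IZR_lt in H. rewrite <- hcoef_eq in H.
  pose proof (INR_fact_lt_0 n).
  apply Rmult_lt_reg_r with (INR (fact n)); lra.
Qed.

Lemma sum_n_mono (u : nat -> R) N m : (forall n, 0 <= u n) -> sum_n u N <= sum_n u (N + m).
Proof.
  intros Hu. induction m. rewrite Nat.add_0_r; lra.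
  rewrite Nat.add_succ_r, sum_Sn. change plus with Rplus. specialize (Hu (S (N+m))). lra.
Qed.

Lemma series_pos (u : nat -> R) (l : R) N : is_series u l -> (forall n, 0 <= u n) -> 0 < u N -> 0 < l.
Proof.
  intros Hs Hu HN.
  assert (H1 : 0 < sum_n u N).
  { destruct N. rewrite sum_O. exact HN.
    rewrite sum_Sn. change plus with Rplus.
    pose proof (sum_n_mono u 0 N Hu). rewrite sum_O in H. simpl in H.
    specialize (Hu 0%nat). lra. }
  assert (H2 : Rbar_le (sum_n u N) l).
  { apply (is_lim_seq_le (fun _ => sum_n u N) (fun m => sum_n u (N + m))).
    - intros m. apply sum_n_mono, Hu.
    - apply is_lim_seq_const.
    - eapply is_lim_seq_ext; [intros m; rewrite Nat.add_comm; reflexivity|].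
      apply (is_lim_seq_incr_n (sum_n u) N l). exact Hs. }
  simpl in H2. lra.
Qed.

Definition sg (ev : bool) : R := if ev then 1 else -1.

Lemma Epos L ev x N :
  0 < x -> (forall n, Nat.even n = ev -> (0 <= zc L n)%Z) -> Nat.even N = ev -> (0 < zc L N)%Z ->
  0 < Hval L x + sg ev * Hval L (-x).
Proof.
  intros Hx Hc HN HNp.
  pose proof (H_series L x) as H1. pose proof (H_series L (-x)) as H2.
  apply (is_series_scal (sg ev)) in H2.
  pose proof (is_series_plus _ _ _ _ H1 H2) as H.
  assert (Hterm : forall n, hcoef L n * x ^ n + sg ev * (hcoef L n * (- x) ^ n) =
     if Bool.eqb (Nat.even n) ev then 2 * hcoef L n * x ^ n else 0).
  { intros n. replace ((-x)^n) with ((-1)^n * x^n) by (rewrite <- Rpow_mult_distr; f_equal; ring).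
    destruct (Nat.even n) eqn:En.
    - apply Nat.even_spec in En. destruct En as [m ->]. rewrite pow_1_even.
      destruct ev; simpl; unfold sg; ring.
    - assert (Nat.odd n = true) by (unfold Nat.odd; rewrite En; reflexivity).
      apply Nat.odd_spec in H0. destruct H0 as [m ->].
      replace (2*m+1)%nat with (S (2*m)) by lia. rewrite pow_1_odd.
      destruct ev; simpl; unfold sg; ring. }
  apply (series_pos _ _ N H).
  - intros n. change plus with Rplus. change scal with Rmult. rewrite Hterm.
    destruct (Bool.eqb (Nat.even n) ev) eqn:E.
    + apply Bool.eqb_prop in E. pose proof (hcoef_nonneg L n (Hc n E)).
      pose proof (pow_le x n). nra.
    + lra.
  - change plus with Rplus. change scal with Rmult. rewrite Hterm.
    rewrite HN, Bool.eqb_reflx. pose proof (hcoef_pos L N HNp). pose proof (pow_lt x N Hx). nra.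
Qed.
Lemma zp_nonneg z n : (0 <= z)%Z -> (0 <= zp z n)%Z.
Proof. intros; induction n; simpl; lia. Qed.
Lemma zp_pos z n : (0 < z)%Z -> (0 < zp z n)%Z.
Proof. intros; induction n; simpl; lia. Qed.
Lemma zp_le_base z1 z2 n : (0 <= z1 <= z2)%Z -> (zp z1 n <= zp z2 n)%Z.
Proof. intros H; induction n; simpl. lia. pose proof (zp_nonneg z1 n). nia. Qed.
Lemma zp_le_exp z m n : (1 <= z)%Z -> (m <= n)%nat -> (zp z m <= zp z n)%Z.
Proof.
  intros Hz Hmn. induction Hmn. lia. simpl. pose proof (zp_nonneg z m0). nia.
Qed.
Lemma zp_mul a b n : zp (a * b) n = (zp a n * zp b n)%Z.
Proof. induction n; simpl; [lia|]. rewrite IHn. ring. Qed.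
Lemma zp_zero_S m : zp 0 (S m) = 0%Z.
Proof. reflexivity. Qed.
Lemma ffZ_bnd n j : (j <= n)%nat -> (0 <= ffZ n j <= zp (Z.of_nat n) j)%Z.
Proof.
  induction j; intros H; simpl. lia.
  specialize (IHj ltac:(lia)). nia.
Qed.

Definition absum (L : list term) : Z := fold_right (fun t s => let '(a,_,_) := t in (Z.abs a + s)%Z) 0%Z L.
Definition bnd_ok (K2 J : nat) (L : list term) : bool :=
  forallb (fun t => let '(a,j,k) := t in Nat.leb k K2 && Nat.leb j J) L.

Lemma tail_term a j k n K2 J : (k <= K2)%nat -> (j <= J)%nat -> (J < n)%nat ->
  (- (Z.abs a * zp (Z.of_nat K2) n * zp (Z.of_nat n) J) <= tcoefZ (a,j,k) n)%Z.
Proof.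
  intros Hk Hj Hn. unfold tcoefZ. rewrite (proj2 (Nat.leb_le j n)) by lia.
  assert (H1 : (0 <= zp (Z.of_nat k) (n - j) <= zp (Z.of_nat K2) n)%Z).
  { split. apply zp_nonneg; lia.
    destruct K2 as [|K2'].
    - assert (k = 0%nat) by lia. subst. replace (n - j)%nat with (S (n - j - 1)) by lia.
      replace n with (S (n-1)) by lia. rewrite !zp_zero_S. lia.
    - apply Z.le_trans with (zp (Z.of_nat (S K2')) (n - j)).
      apply zp_le_base; lia. apply zp_le_exp; lia. }
  assert (H2 : (0 <= ffZ n j <= zp (Z.of_nat n) J)%Z).
  { pose proof (ffZ_bnd n j ltac:(lia)). split. lia.
    apply Z.le_trans with (zp (Z.of_nat n) j). lia. apply zp_le_exp; lia. }
  assert (H3 : (0 <= zp (Z.of_nat k) (n - j) * ffZ n j <= zp (Z.of_nat K2) n * zp (Z.of_nat n) J)%Z) by nia.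
  destruct (Z.abs_spec a) as [[Ha ->]|[Ha ->]]; nia.
Qed.

Lemma zc_rest L n K2 J : bnd_ok K2 J L = true -> (J < n)%nat ->
  (- (absum L * zp (Z.of_nat K2) n * zp (Z.of_nat n) J) <= zc L n)%Z.
Proof.
  intros HL Hn. induction L as [|[[a j] k] L IH]; simpl. lia.
  simpl in HL. apply andb_prop in HL as [Ht HL]. apply andb_prop in Ht as [Hk Hj].
  apply Nat.leb_le in Hk, Hj.
  pose proof (tail_term a j k n K2 J Hk Hj Hn). specialize (IH HL).
  unfold tcoefZ in H. rewrite !Z.mul_add_distr_r. lia.
Qed.

Definition tail_ok (a0 : Z) (K K2 J N0 : nat) (L : list term) : bool :=
  (0 <? a0)%Z && bnd_ok K2 J L && Nat.ltb J N0 &&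
  (absum L * zp (Z.of_nat K2) N0 * zp (Z.of_nat N0) J <=? a0 * zp (Z.of_nat K) N0)%Z &&
  (Z.of_nat K2 * zp (Z.of_nat (S N0)) J <=? Z.of_nat K * zp (Z.of_nat N0) J)%Z.

Lemma tail_lemma a0 K K2 J N0 L : tail_ok a0 K K2 J N0 L = true ->
  forall n, (N0 <= n)%nat -> (0 <= zc ((a0,0%nat,K)::L) n)%Z.
Proof.
  unfold tail_ok. intros H.
  apply andb_prop in H as [H Hstep]. apply andb_prop in H as [H Hbase].
  apply andb_prop in H as [H HJ]. apply andb_prop in H as [Ha0 HL].
  apply Z.ltb_lt in Ha0. apply Nat.ltb_lt in HJ. apply Z.leb_le in Hbase, Hstep.
  set (M := absum L) in *.
  assert (HM : (0 <= M)%Z).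
  { subst M. clear. induction L as [|[[a j] k] L IH]; simpl; lia. }
  assert (Hdom : forall n, (N0 <= n)%nat ->
     (M * zp (Z.of_nat K2) n * zp (Z.of_nat n) J <= a0 * zp (Z.of_nat K) n)%Z).
  { intros n Hn. induction Hn. exact Hbase.
    rename m into n.
    assert (Hst : (Z.of_nat K2 * zp (Z.of_nat (S n)) J <= Z.of_nat K * zp (Z.of_nat n) J)%Z).
    { assert (E1 : (zp (Z.of_nat N0) J * zp (Z.of_nat (S n)) J <= zp (Z.of_nat (S N0)) J * zp (Z.of_nat n) J)%Z).
      { rewrite <- !zp_mul. apply zp_le_base. split. lia. rewrite !Nat2Z.inj_succ. nia. }
      assert (P0 : (0 < zp (Z.of_nat N0) J)%Z) by (apply zp_pos; lia).
      pose proof (zp_nonneg (Z.of_nat (S n)) J ltac:(lia)).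
      pose proof (zp_nonneg (Z.of_nat n) J ltac:(lia)).
      assert (Hprod : (Z.of_nat K2 * zp (Z.of_nat (S n)) J * zp (Z.of_nat N0) J <=
                      Z.of_nat K * zp (Z.of_nat n) J * zp (Z.of_nat N0) J)%Z) by nia.
      apply Z.mul_le_mono_pos_r in Hprod; auto. }
    change (zp (Z.of_nat K2) (S n)) with (Z.of_nat K2 * zp (Z.of_nat K2) n)%Z.
    change (zp (Z.of_nat K) (S n)) with (Z.of_nat K * zp (Z.of_nat K) n)%Z.
    pose proof (zp_nonneg (Z.of_nat K2) n ltac:(lia)).
    pose proof (zp_nonneg (Z.of_nat K) n ltac:(lia)).
    pose proof (zp_nonneg (Z.of_nat (S n)) J ltac:(lia)).
    pose proof (zp_nonneg (Z.of_nat n) J ltac:(lia)).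
    assert (A1 : (M * zp (Z.of_nat K2) n * (Z.of_nat K2 * zp (Z.of_nat (S n)) J) <=
                  M * zp (Z.of_nat K2) n * (Z.of_nat K * zp (Z.of_nat n) J))%Z).
    { apply Z.mul_le_mono_nonneg_l; [nia|exact Hst]. }
    assert (A2 : (Z.of_nat K * (M * zp (Z.of_nat K2) n * zp (Z.of_nat n) J) <=
                  Z.of_nat K * (a0 * zp (Z.of_nat K) n))%Z).
    { apply Z.mul_le_mono_nonneg_l; [lia|exact IHHn]. }
    nia. }
  intros n Hn. change (zc ((a0,0%nat,K)::L) n) with (tcoefZ (a0,0%nat,K) n + zc L n)%Z.
  unfold tcoefZ. simpl Nat.leb. cbv iota. rewrite Nat.sub_0_r. simpl ffZ.
  pose proof (zc_rest L n K2 J HL ltac:(lia)). specialize (Hdom n Hn). fold M in H. nia.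
Qed.

Definition chk (L : list term) (N0 : nat) (ev : bool) : bool :=
  forallb (fun n => negb (Bool.eqb (Nat.even n) ev) || (0 <=? zc L n)%Z) (seq 0 N0).

Lemma chk_ok L N0 ev : chk L N0 ev = true -> forall n, (n < N0)%nat -> Nat.even n = ev -> (0 <= zc L n)%Z.
Proof.
  unfold chk. intros H n Hn He. rewrite forallb_forall in H.
  specialize (H n (proj2 (in_seq N0 0 n) ltac:(lia))).
  rewrite He, Bool.eqb_reflx in H. simpl in H. apply Z.leb_le, H.
Qed.

Lemma all_coef a0 K K2 J N0 L ev : tail_ok a0 K K2 J N0 L = true -> chk ((a0,0%nat,K)::L) N0 ev = true ->
  forall n, Nat.even n = ev -> (0 <= zc ((a0,0%nat,K)::L) n)%Z.
Proof.
  intros T C n He. destruct (Nat.lt_ge_cases n N0).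
  - eapply chk_ok; eauto.
  - eapply tail_lemma; eauto.
Qed.
Definition Sfun (L : list term) (n : nat) : Z :=
  fold_right (fun t s => let '(a,j,k) := t in (Z.abs a * zp (Z.of_nat k) n * zp (Z.of_nat n) j + s)%Z) 0%Z L.
Definition step_ok (K N0 : nat) (L : list term) : bool :=
  forallb (fun t => let '(a,j,k) := t in Nat.leb 1 k &&
     (Z.of_nat k * zp (Z.of_nat (S N0)) j <=? Z.of_nat K * zp (Z.of_nat N0) j)%Z) L.
Definition tail_ok2 (a0 : Z) (K N0 : nat) (L : list term) : bool :=
  (0 <? a0)%Z && Nat.leb 1 N0 && step_ok K N0 L && (Sfun L N0 <=? a0 * zp (Z.of_nat K) N0)%Z.

Lemma tail_term2 a j k n : (1 <= k)%nat ->
  (- (Z.abs a * zp (Z.of_nat k) n * zp (Z.of_nat n) j) <= tcoefZ (a,j,k) n)%Z.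
Proof.
  intros Hk. unfold tcoefZ.
  pose proof (zp_nonneg (Z.of_nat k) n ltac:(lia)). pose proof (zp_nonneg (Z.of_nat n) j ltac:(lia)).
  destruct (Nat.leb j n) eqn:E; [|nia].
  apply Nat.leb_le in E.
  assert (H1 : (0 <= zp (Z.of_nat k) (n - j) <= zp (Z.of_nat k) n)%Z).
  { split. apply zp_nonneg; lia. apply zp_le_exp; lia. }
  pose proof (ffZ_bnd n j E) as H2.
  assert (H3 : (0 <= zp (Z.of_nat k) (n - j) * ffZ n j <= zp (Z.of_nat k) n * zp (Z.of_nat n) j)%Z) by nia.
  destruct (Z.abs_spec a) as [[Ha ->]|[Ha ->]]; nia.
Qed.

Lemma zc_rest2 L n K N0 : step_ok K N0 L = true -> (- Sfun L n <= zc L n)%Z.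
Proof.
  intros HL. induction L as [|[[a j] k] L IH]; simpl. lia.
  simpl in HL. apply andb_prop in HL as [Ht HL]. apply andb_prop in Ht as [Hk0 _].
  assert (Hk : (1 <= k)%nat) by (destruct k; [discriminate|lia]).
  pose proof (tail_term2 a j k n Hk). specialize (IH HL). unfold tcoefZ in H. lia.
Qed.

Lemma step_gen k K j N0 n : (1 <= N0)%nat -> (N0 <= n)%nat ->
  (Z.of_nat k * zp (Z.of_nat (S N0)) j <= Z.of_nat K * zp (Z.of_nat N0) j)%Z ->
  (Z.of_nat k * zp (Z.of_nat (S n)) j <= Z.of_nat K * zp (Z.of_nat n) j)%Z.
Proof.
  intros H0 Hn Hst.
  assert (E1 : (zp (Z.of_nat N0) j * zp (Z.of_nat (S n)) j <= zp (Z.of_nat (S N0)) j * zp (Z.of_nat n) j)%Z).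
  { rewrite <- !zp_mul. apply zp_le_base. split. lia. rewrite !Nat2Z.inj_succ. nia. }
  assert (P0 : (0 < zp (Z.of_nat N0) j)%Z) by (apply zp_pos; lia).
  pose proof (zp_nonneg (Z.of_nat (S n)) j ltac:(lia)).
  pose proof (zp_nonneg (Z.of_nat n) j ltac:(lia)).
  assert (Hprod : (Z.of_nat k * zp (Z.of_nat (S n)) j * zp (Z.of_nat N0) j <=
                  Z.of_nat K * zp (Z.of_nat n) j * zp (Z.of_nat N0) j)%Z) by nia.
  apply Z.mul_le_mono_pos_r in Hprod; auto.
Qed.

Lemma Sfun_step L K N0 n : (1 <= N0)%nat -> (N0 <= n)%nat -> step_ok K N0 L = true ->
  (Sfun L (S n) <= Z.of_nat K * Sfun L n)%Z.
Proof.
  intros H0 Hn HL. induction L as [|[[a j] k] L IH]. simpl. lia.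
  change (Sfun ((a,j,k)::L) (S n)) with (Z.abs a * zp (Z.of_nat k) (S n) * zp (Z.of_nat (S n)) j + Sfun L (S n))%Z.
  change (Sfun ((a,j,k)::L) n) with (Z.abs a * zp (Z.of_nat k) n * zp (Z.of_nat n) j + Sfun L n)%Z.
  simpl in HL. apply andb_prop in HL as [Ht HL]. apply andb_prop in Ht as [Hk Hs].
  apply Z.leb_le in Hs. specialize (IH HL).
  pose proof (step_gen k K j N0 n H0 Hn Hs) as St.
  change (zp (Z.of_nat k) (S n)) with (Z.of_nat k * zp (Z.of_nat k) n)%Z.
  pose proof (zp_nonneg (Z.of_nat k) n ltac:(lia)).
  assert (A1 : (Z.abs a * zp (Z.of_nat k) n * (Z.of_nat k * zp (Z.of_nat (S n)) j) <=
                Z.abs a * zp (Z.of_nat k) n * (Z.of_nat K * zp (Z.of_nat n) j))%Z).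
  { apply Z.mul_le_mono_nonneg_l; [nia|exact St]. }
  nia.
Qed.

Lemma tail_lemma2 a0 K N0 L : tail_ok2 a0 K N0 L = true ->
  forall n, (N0 <= n)%nat -> (0 <= zc ((a0,0%nat,K)::L) n)%Z.
Proof.
  unfold tail_ok2. intros H.
  apply andb_prop in H as [H Hbase]. apply andb_prop in H as [H HL].
  apply andb_prop in H as [Ha0 HN].
  apply Z.ltb_lt in Ha0. apply Nat.leb_le in HN. apply Z.leb_le in Hbase.
  assert (Hdom : forall n, (N0 <= n)%nat -> (Sfun L n <= a0 * zp (Z.of_nat K) n)%Z).
  { intros n Hn. induction Hn. exact Hbase.
    pose proof (Sfun_step L K N0 m HN Hn HL).
    change (zp (Z.of_nat K) (S m)) with (Z.of_nat K * zp (Z.of_nat K) m)%Z.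
    assert (Z.of_nat K * Sfun L m <= Z.of_nat K * (a0 * zp (Z.of_nat K) m))%Z.
    { apply Z.mul_le_mono_nonneg_l; [lia|exact IHHn]. }
    nia. }
  intros n Hn. change (zc ((a0,0%nat,K)::L) n) with (tcoefZ (a0,0%nat,K) n + zc L n)%Z.
  unfold tcoefZ. simpl Nat.leb. cbv iota. rewrite Nat.sub_0_r. simpl ffZ.
  pose proof (zc_rest2 L n K N0 HL). specialize (Hdom n Hn). nia.
Qed.

Lemma all_coef2 a0 K N0 L ev : tail_ok2 a0 K N0 L = true -> chk ((a0,0%nat,K)::L) N0 ev = true ->
  forall n, Nat.even n = ev -> (0 <= zc ((a0,0%nat,K)::L) n)%Z.
Proof.
  intros T C n He. destruct (Nat.lt_ge_cases n N0).
  - eapply chk_ok; eauto.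
  - eapply tail_lemma2; eauto.
Qed.
Lemma mono_le (f df : R -> R) a b : a <= b ->
  (forall t, a <= t <= b -> is_derive f t (df t)) -> (forall t, a <= t <= b -> 0 <= df t) -> f a <= f b.
Proof.
  intros Hab Hd Hp. destruct (Req_dec a b) as [->|Hne]. lra.
  destruct (MVT_cor2 f df a b ltac:(lra)) as [c [Hc1 Hc2]].
  - intros c Hc. apply is_derive_Reals, Hd; lra.
  - specialize (Hp c ltac:(lra)). nra.
Qed.

Lemma mono_lt (f df : R -> R) a b : a < b ->
  (forall t, a <= t <= b -> is_derive f t (df t)) -> (forall t, a < t < b -> 0 < df t) -> f a < f b.
Proof.
  intros Hab Hd Hp.
  destruct (MVT_cor2 f df a b Hab) as [c [Hc1 Hc2]].
  - intros c Hc. apply is_derive_Reals, Hd; lra.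
  - specialize (Hp c ltac:(lra)). nra.
Qed.

Lemma cosh_ge1 x : 1 <= cosh x.
Proof.
  unfold cosh. rewrite exp_Ropp. pose proof (exp_pos x).
  assert (0 <= (exp x - 1)^2) by apply pow2_ge_0.
  apply Rmult_le_reg_r with (2 * exp x). lra. field_simplify. nra. lra.
Qed.

Lemma cosh_pos x : 0 < cosh x.
Proof. pose proof (cosh_ge1 x); lra. Qed.

Definition L2 : list term := [(120%Z,0%nat,1%nat); ((-120)%Z,1%nat,0%nat); ((-20)%Z,3%nat,0%nat); ((-1)%Z,5%nat,0%nat)].
Lemma L2_tail : tail_ok 120 1 0 5 6 (tl L2) = true. Proof. vm_compute. reflexivity. Qed.
Lemma L2_chk : chk L2 6 false = true. Proof. vm_compute. reflexivity. Qed.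

Lemma sinh_lo x : 0 < x -> x + x^3/6 + x^5/120 < sinh x.
Proof.
  intros Hx.
  pose proof (Epos L2 false x 7 Hx (all_coef 120 1 0 5 6 (tl L2) false L2_tail L2_chk) eq_refl
     ltac:(vm_compute; reflexivity)) as H.
  assert (E : Hval L2 x + sg false * Hval L2 (-x) = 240 * (sinh x - (x + x^3/6 + x^5/120))).
  { unfold L2, sg. simpl Hval. rewrite exp_Ropp. unfold sinh. rewrite exp_Ropp.
    pose proof (exp_pos x). field. lra. }
  lra.
Qed.

Lemma sinh_pos x : 0 < x -> 0 < sinh x.
Proof. intros Hx. pose proof (sinh_lo x Hx). pose proof (pow_lt x 3 Hx). pose proof (pow_lt x 5 Hx). lra. Qed.

Lemma sinh_gt x : 0 < x -> x < sinh x.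
Proof. intros Hx. pose proof (sinh_lo x Hx). pose proof (pow_lt x 3 Hx). pose proof (pow_lt x 5 Hx). lra. Qed.

Lemma sinh0 : sinh 0 = 0.
Proof. unfold sinh. rewrite Ropp_0. lra. Qed.
Lemma cosh0 : cosh 0 = 1.
Proof. unfold cosh. rewrite Ropp_0, exp_0. lra. Qed.

Lemma mono0 (f df : R -> R) x : 0 <= x ->
  (forall t, 0 <= t <= x -> is_derive f t (df t)) -> (forall t, 0 <= t <= x -> 0 <= df t) -> f 0 <= f x.
Proof. intros; apply mono_le with df; auto. Qed.

Ltac m0 f df x := let H := fresh in
  pose proof (mono0 f df x ltac:(lra)) as H; cbv beta in H;
  apply H; [intros ? _; auto_derive; auto; field|].

Lemma cosh1_le2 : cosh 1 <= 2.
Proof.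
  unfold cosh. rewrite exp_Ropp. pose proof exp_le_3. pose proof (exp_pos 1).
  pose proof (exp_ineq1_le 1).
  apply Rmult_le_reg_r with (2 * exp 1). lra. field_simplify. nra. lra.
Qed.

Lemma cosh_le2 x : 0 <= x <= 1 -> cosh x <= 2.
Proof.
  intros Hx. pose proof cosh1_le2.
  assert (cosh x <= cosh 1).
  { apply (mono_le cosh sinh x 1); [lra| |].
    - intros t _. auto_derive; auto. ring.
    - intros t Ht. destruct (Req_dec t 0) as [->|Hne].
      + unfold sinh. rewrite Ropp_0, Rminus_eq_0. lra.
      + pose proof (sinh_pos t ltac:(lra)). lra. }
  lra.
Qed.

Lemma sinh_up x : 0 <= x <= 1 -> sinh x <= x + x^3/6 + x^5/60.
Proof.
  intros Hx.
  assert (H5 : forall t, 0 <= t <= 1 -> 0 <= 2*t - sinh t).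
  { intros t Ht. replace 0 with (2*0 - sinh 0) by (rewrite sinh0; field).
    m0 (fun t => 2*t - sinh t) (fun t => 2 - cosh t) t.
    intros s Hs. pose proof (cosh_le2 s ltac:(lra)). lra. }
  assert (H4 : forall t, 0 <= t <= 1 -> 0 <= 1 + t^2 - cosh t).
  { intros t Ht. replace 0 with (1 + 0^2 - cosh 0) by (rewrite cosh0; field).
    m0 (fun t => 1 + t^2 - cosh t) (fun t => 2*t - sinh t) t.
    intros s Hs. pose proof (H5 s ltac:(lra)). lra. }
  assert (H3 : forall t, 0 <= t <= 1 -> 0 <= t + t^3/3 - sinh t).
  { intros t Ht. replace 0 with (0 + 0^3/3 - sinh 0) by (rewrite sinh0; field).
    m0 (fun t => t + t^3/3 - sinh t) (fun t => 1 + t^2 - cosh t) t.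
    intros s Hs. pose proof (H4 s ltac:(lra)). lra. }
  assert (H2 : forall t, 0 <= t <= 1 -> 0 <= 1 + t^2/2 + t^4/12 - cosh t).
  { intros t Ht. replace 0 with (1 + 0^2/2 + 0^4/12 - cosh 0) by (rewrite cosh0; field).
    m0 (fun t => 1 + t^2/2 + t^4/12 - cosh t) (fun t => t + t^3/3 - sinh t) t.
    intros s Hs. pose proof (H3 s ltac:(lra)). lra. }
  enough (0 <= x + x^3/6 + x^5/60 - sinh x) by lra.
  replace 0 with (0 + 0^3/6 + 0^5/60 - sinh 0) by (rewrite sinh0; field).
  m0 (fun t => t + t^3/6 + t^5/60 - sinh t) (fun t => 1 + t^2/2 + t^4/12 - cosh t) x.
  intros s Hs. pose proof (H2 s ltac:(lra)). lra.
Qed.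

Lemma cosh_up x : 0 <= x <= 1 -> cosh x <= 1 + x^2/2 + x^4/24 + x^6/360.
Proof.
  intros Hx.
  assert (H6 : forall t, 0 <= t <= 1 -> 0 <= 2 - cosh t).
  { intros t Ht. pose proof (cosh_le2 t Ht). lra. }
  assert (H5 : forall t, 0 <= t <= 1 -> 0 <= 2*t - sinh t).
  { intros t Ht. replace 0 with (2*0 - sinh 0) by (rewrite sinh0; field).
    m0 (fun t => 2*t - sinh t) (fun t => 2 - cosh t) t.
    intros s Hs. apply H6; lra. }
  assert (H4 : forall t, 0 <= t <= 1 -> 0 <= 1 + t^2 - cosh t).
  { intros t Ht. replace 0 with (1 + 0^2 - cosh 0) by (rewrite cosh0; field).
    m0 (fun t => 1 + t^2 - cosh t) (fun t => 2*t - sinh t) t.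
    intros s Hs. apply H5; lra. }
  assert (H3 : forall t, 0 <= t <= 1 -> 0 <= t + t^3/3 - sinh t).
  { intros t Ht. replace 0 with (0 + 0^3/3 - sinh 0) by (rewrite sinh0; field).
    m0 (fun t => t + t^3/3 - sinh t) (fun t => 1 + t^2 - cosh t) t.
    intros s Hs. apply H4; lra. }
  assert (H2 : forall t, 0 <= t <= 1 -> 0 <= 1 + t^2/2 + t^4/12 - cosh t).
  { intros t Ht. replace 0 with (1 + 0^2/2 + 0^4/12 - cosh 0) by (rewrite cosh0; field).
    m0 (fun t => 1 + t^2/2 + t^4/12 - cosh t) (fun t => t + t^3/3 - sinh t) t.
    intros s Hs. apply H3; lra. }
  assert (H1 : forall t, 0 <= t <= 1 -> 0 <= t + t^3/6 + t^5/60 - sinh t).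
  { intros t Ht. replace 0 with (0 + 0^3/6 + 0^5/60 - sinh 0) by (rewrite sinh0; field).
    m0 (fun t => t + t^3/6 + t^5/60 - sinh t) (fun t => 1 + t^2/2 + t^4/12 - cosh t) t.
    intros s Hs. apply H2; lra. }
  enough (0 <= 1 + x^2/2 + x^4/24 + x^6/360 - cosh x) by lra.
  replace 0 with (1 + 0^2/2 + 0^4/24 + 0^6/360 - cosh 0) by (rewrite cosh0; field).
  m0 (fun t => 1 + t^2/2 + t^4/24 + t^6/360 - cosh t) (fun t => t + t^3/6 + t^5/60 - sinh t) x.
  intros s Hs. apply H1; lra.
Qed.
Lemma B_pos x : 0 < x -> sinh x < x * cosh x.
Proof.
  intros Hx.
  enough (0 * cosh 0 - sinh 0 < x * cosh x - sinh x) by (rewrite sinh0 in H; lra).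
  apply (mono_lt (fun t => t * cosh t - sinh t) (fun t => t * sinh t) 0 x Hx).
  - intros t _. auto_derive; auto. ring.
  - intros t Ht. pose proof (sinh_pos t ltac:(lra)). nra.
Qed.

Lemma ln_le_lin t : 0 < t -> ln t <= t - 1.
Proof.
  intros Ht. pose proof (exp_ineq1_le (t - 1)).
  rewrite <- (ln_exp (t - 1)). apply ln_le; lra.
Qed.

Lemma ln_lo t : 0 <= t -> t - t^2/2 <= ln (1 + t).
Proof.
  intros Ht. enough (ln (1 + 0) - 0 + 0^2/2 <= ln (1+t) - t + t^2/2) by (rewrite Rplus_0_r, ln_1 in H; lra).
  apply (mono0 (fun t => ln (1 + t) - t + t^2/2) (fun t => t^2 / (1 + t)) t Ht).
  - intros s Hs. auto_derive. lra. field. lra.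
  - intros s Hs. apply Rmult_le_pos. nra. apply Rlt_le, Rinv_0_lt_compat. lra.
Qed.

Lemma ln_up u : 0 <= u -> ln (1 + u) <= u - u^2/2 + u^3/3.
Proof.
  intros Hu. enough (0 - 0^2/2 + 0^3/3 - ln (1 + 0) <= u - u^2/2 + u^3/3 - ln (1+u)) by (rewrite Rplus_0_r, ln_1 in H; lra).
  apply (mono0 (fun t => t - t^2/2 + t^3/3 - ln (1 + t)) (fun t => t^3 / (1 + t)) u Hu).
  - intros s Hs. auto_derive. lra. field. lra.
  - intros s Hs. apply Rmult_le_pos. pose proof (pow_le s 3 ltac:(lra)); lra. apply Rlt_le, Rinv_0_lt_compat. lra.
Qed.

Lemma exp_neg_up w : 0 <= w -> exp (- w) <= 1 - w + w^2/2.
Proof.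
  intros Hw. enough (1 - 0 + 0^2/2 - exp (-0) <= 1 - w + w^2/2 - exp (-w)) by (rewrite Ropp_0, exp_0 in H; lra).
  apply (mono0 (fun t => 1 - t + t^2/2 - exp (-t)) (fun t => -1 + t + exp (-t)) w Hw).
  - intros s Hs. auto_derive. auto. field.
  - intros s Hs. pose proof (exp_ineq1_le (-s)). lra.
Qed.

Lemma exp_neg_lo w : 0 <= w -> 1 - w + w^2/2 - w^3/6 <= exp (- w).
Proof.
  intros Hw. enough (exp (-0) - 1 + 0 - 0^2/2 + 0^3/6 <= exp (-w) - 1 + w - w^2/2 + w^3/6) by (rewrite Ropp_0, exp_0 in H; lra).
  apply (mono0 (fun t => exp (-t) - 1 + t - t^2/2 + t^3/6) (fun t => - exp (-t) + 1 - t + t^2/2) w Hw).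
  - intros s Hs. auto_derive. auto. field.
  - intros s Hs. pose proof (exp_neg_up s ltac:(lra)). lra.
Qed.

Lemma exp_small_up z : 0 <= z <= 1/10 -> exp z <= 1 + z + z^2/2 + z^3.
Proof.
  intros Hz. pose proof (exp_neg_lo z ltac:(lra)) as H. rewrite exp_Ropp in H.
  pose proof (exp_pos z).
  assert (P : 0 < 1 - z + z^2/2 - z^3/6) by nra.
  assert (Q : 1 <= (1 + z + z^2/2 + z^3) * (1 - z + z^2/2 - z^3/6)) by nra.
  assert (exp z * (1 - z + z^2/2 - z^3/6) <= 1).
  { apply Rmult_le_reg_r with (/ exp z). apply Rinv_0_lt_compat; lra.
    rewrite Rmult_comm, <- Rmult_assoc, Rinv_l by lra. lra. }
  nra.
Qed.
Definition L1 : list term := [(1%Z,0%nat,3%nat); ((-3)%Z,0%nat,1%nat); ((-4)%Z,3%nat,1%nat)].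
Lemma L1_tail : tail_ok 1 3 1 3 10 (tl L1) = true. Proof. vm_compute. reflexivity. Qed.
Lemma L1_chk : chk L1 10 false = true. Proof. vm_compute. reflexivity. Qed.

Lemma P1 x : 0 < x -> x^3 * cosh x < sinh x ^ 3.
Proof.
  intros Hx.
  pose proof (Epos L1 false x 7 Hx (all_coef 1 3 1 3 10 (tl L1) false L1_tail L1_chk) eq_refl
     ltac:(vm_compute; reflexivity)) as H.
  assert (E : Hval L1 x + sg false * Hval L1 (-x) = 8 * (sinh x ^ 3 - x^3 * cosh x)).
  { unfold L1, sg. simpl Hval. rewrite exp_Ropp. unfold sinh, cosh. rewrite exp_Ropp.
    pose proof (exp_pos x). field. lra. }
  lra.
Qed.
Definition LE : list term := [(2%Z,0%nat,13%nat); ((-6)%Z,0%nat,11%nat); ((-40)%Z,1%nat,11%nat); ((-4)%Z,0%nat,9%nat); (120%Z,1%nat,9%nat); (320%Z,2%nat,9%nat); (28%Z,0%nat,7%nat); (40%Z,1%nat,7%nat); ((-960)%Z,2%nat,7%nat); (2816%Z,3%nat,7%nat); ((-20480)%Z,4%nat,7%nat); (40960%Z,5%nat,7%nat); ((-40960)%Z,6%nat,7%nat); (20480%Z,7%nat,7%nat); ((-4096)%Z,8%nat,7%nat); ((-10)%Z,0%nat,5%nat); ((-440)%Z,1%nat,5%nat); ((-8448)%Z,3%nat,5%nat); (23040%Z,4%nat,5%nat); (40960%Z,5%nat,5%nat); ((-122880)%Z,6%nat,5%nat); (102400%Z,7%nat,5%nat); ((-28672)%Z,8%nat,5%nat); ((-50)%Z,0%nat,3%nat);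 (240%Z,1%nat,3%nat); (2560%Z,2%nat,3%nat); (2816%Z,3%nat,3%nat); (53760%Z,4%nat,3%nat); ((-124928)%Z,5%nat,3%nat); ((-40960)%Z,6%nat,3%nat); (184320%Z,7%nat,3%nat); ((-86016)%Z,8%nat,3%nat); (40%Z,0%nat,1%nat); (560%Z,1%nat,1%nat); ((-1920)%Z,2%nat,1%nat); (14080%Z,3%nat,1%nat); ((-56320)%Z,4%nat,1%nat); ((-116736)%Z,5%nat,1%nat); (204800%Z,6%nat,1%nat); (102400%Z,7%nat,1%nat); ((-143360)%Z,8%nat,1%nat)].
Lemma LE_tail : tail_ok2 2 13 67 (tl LE) = true. Proof. vm_compute. reflexivity. Qed.
Lemma LE_chk : chk LE 67 true = true. Proof. vm_compute. reflexivity. Qed.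

Lemma Ecore x : 0 < x ->
  32 * (x * cosh x - sinh x)^5 * x^3 * cosh x ^ 2 < (sinh x * cosh x - x)^5 * sinh x ^ 3.
Proof.
  intros Hx.
  pose proof (Epos LE true x 22 Hx (all_coef2 2 13 67 (tl LE) true LE_tail LE_chk) eq_refl
     ltac:(vm_compute; reflexivity)) as H.
  assert (E : Hval LE x + sg true * Hval LE (-x) =
     16384 * ((sinh x * cosh x - x)^5 * sinh x ^ 3 - 32 * (x * cosh x - sinh x)^5 * x^3 * cosh x ^ 2)).
  { unfold LE, sg. simpl Hval. rewrite exp_Ropp. unfold sinh, cosh. rewrite exp_Ropp.
    pose proof (exp_pos x). field. lra. }
  lra.
Qed.
Lemma ch_sh x : cosh x ^ 2 - sinh x ^ 2 = 1.
Proof. unfold cosh, sinh. rewrite exp_Ropp. pose proof (exp_pos x). field. lra. Qed.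

Definition a1 t := exp (6/5 * (ln t - ln (sinh t))).
Definition a2 t := exp (3/5 * (ln t + ln (cosh t) - ln (sinh t))).
Definition F t := a1 t + a2 t - 2.
Definition dF t := 6/5 * (/t - cosh t / sinh t) * a1 t + 3/5 * (/t + sinh t / cosh t - cosh t / sinh t) * a2 t.

Lemma F_der t : 0 < t -> is_derive F t (dF t).
Proof.
  intros Ht. pose proof (sinh_pos t Ht). pose proof (cosh_pos t).
  unfold F, dF, a1, a2. auto_derive.
  - repeat split; auto.
  - unfold Rminus. field. split; lra.
Qed.

Lemma dF_pos t : 0 < t -> 0 < dF t.
Proof.
  intros Ht. pose proof (sinh_pos t Ht) as Hs. pose proof (cosh_pos t) as Hc.
  pose proof (B_pos t Ht) as HB. pose proof (sinh_gt t Ht) as Hst. pose proof (cosh_ge1 t).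
  pose proof (ch_sh t) as Hcs. pose proof (Ecore t Ht) as HE.
  unfold dF, a1, a2.
  remember (sinh t) as s. remember (cosh t) as c. clear Heqs Heqc.
  remember (s * c - t) as A. remember (t * c - s) as B.
  assert (HA : 0 < A) by (subst A; nra).
  assert (HB' : 0 < B) by (subst B; lra).
  assert (Hlog : 5 * ln 2 + 5 * ln B + 3 * ln t + 2 * ln c < 5 * ln A + 3 * ln s).
  { apply ln_increasing in HE.
    - replace 32 with (2^5) in HE by ring.
      rewrite !ln_mult, !ln_pow in HE by (try apply pow_lt; try lra; try nra;
         repeat apply Rmult_lt_0_compat; try apply pow_lt; lra).
      simpl INR in HE. lra.
    - repeat apply Rmult_lt_0_compat; try apply pow_lt; lra. }
  set (e1 := exp (6 / 5 * (ln t - ln s))). set (e2 := exp (3 / 5 * (ln t + ln c - ln s))).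
  assert (He1 : 0 < e1) by apply exp_pos. assert (He2 : 0 < e2) by apply exp_pos.
  assert (Hk : 2 * e1 * B * c < e2 * A).
  { apply ln_lt_inv.
    - repeat apply Rmult_lt_0_compat; lra.
    - repeat apply Rmult_lt_0_compat; lra.
    - unfold e1, e2.
      rewrite !ln_mult by (try apply exp_pos; try lra; repeat apply Rmult_lt_0_compat; try apply exp_pos; lra).
      rewrite !ln_exp. lra. }
  assert (E1 : /t - c / s = - B / (t * s)) by (rewrite HeqB; field; lra).
  assert (E2 : /t + s / c - c / s = A / (t * s * c)).
  { rewrite HeqA. replace (s*c - t) with (s*c - t*(c^2 - s^2)) by (rewrite Hcs; ring).
    field. repeat split; lra. }
  rewrite E1, E2.
  assert (P : 0 < /(t * s * c)) by (apply Rinv_0_lt_compat; repeat apply Rmult_lt_0_compat; lra).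
  replace (6 / 5 * (- B / (t * s)) * e1 + 3 / 5 * (A / (t * s * c)) * e2)
    with (3/5 * / (t * s * c) * (e2 * A - 2 * e1 * B * c)) by (field; repeat split; lra).
  apply Rmult_lt_0_compat. nra. lra.
Qed.

Lemma F_lo e : 0 < e <= 1 -> - e^2 <= F e.
Proof.
  intros He. pose proof (sinh_pos e ltac:(lra)) as Hs. pose proof (cosh_pos e) as Hc.
  pose proof (B_pos e ltac:(lra)) as HB. pose proof (cosh_ge1 e).
  pose proof (cosh_up e ltac:(lra)) as Hcu.
  assert (L1 : ln (sinh e) <= ln e + ln (cosh e)).
  { rewrite <- ln_mult by lra. apply ln_le; lra. }
  pose proof (ln_le_lin (cosh e) Hc) as L2.
  unfold F, a1, a2.
  pose proof (exp_ineq1_le (6 / 5 * (ln e - ln (sinh e)))).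
  pose proof (exp_ineq1_le (3 / 5 * (ln e + ln (cosh e) - ln (sinh e)))).
  assert (Q1 : 0 <= e^2 <= 1) by (split; nra).
  assert (Q2 : e^4 <= e^2) by (replace (e^4) with (e^2*e^2) by ring; nra).
  assert (Q3 : e^6 <= e^2) by (replace (e^6) with (e^2*e^4) by ring; nra).
  lra.
Qed.
Lemma F_mono a b : 0 < a <= b -> F a <= F b.
Proof.
  intros H. apply (mono_le F dF a b); try lra.
  - intros t Ht. apply F_der; lra.
  - intros t Ht. apply Rlt_le, dF_pos; lra.
Qed.

Lemma F_pos x : 0 < x -> 0 < F x.
Proof.
  intros Hx.
  assert (H1 : F (x/2) < F x).
  { apply (mono_lt F dF (x/2) x); try lra.
    - intros t Ht. apply F_der; lra.
    - intros t Ht. apply dF_pos; lra. }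
  assert (H2 : 0 <= F (x/2)).
  { destruct (Rle_or_lt 0 (F (x/2))) as [h|h]; auto.
    set (d := - F (x/2)).
    set (e := Rmin 1 (Rmin (x/2) (d/2))).
    assert (He1 : 0 < e).
    { unfold e. apply Rmin_glb_lt. lra. apply Rmin_glb_lt; unfold d; lra. }
    assert (He2 : e <= 1) by apply Rmin_l.
    assert (He3 : e <= x/2) by (unfold e; eapply Rle_trans; [apply Rmin_r|apply Rmin_l]).
    assert (He4 : e <= d/2) by (unfold e; eapply Rle_trans; [apply Rmin_r|apply Rmin_r]).
    pose proof (F_lo e ltac:(lra)). pose proof (F_mono e (x/2) ltac:(lra)).
    assert (e^2 <= e) by (simpl; nra). unfold d in *. lra. }
  lra.
Qed.

Lemma bern r u : 1 <= r -> 1 + r * (exp u - 1) <= exp (r * u).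
Proof.
  intros Hr.
  assert (h1 : exp u * (1 + (r * u - u)) <= exp (r * u)).
  { replace (r * u) with (u + (r * u - u)) at 2 by ring. rewrite exp_plus.
    apply Rmult_le_compat_l. apply Rlt_le, exp_pos. apply exp_ineq1_le. }
  assert (h2 : exp u * (1 - u) <= 1).
  { pose proof (exp_ineq1_le (-u)). rewrite exp_Ropp in H.
    pose proof (exp_pos u).
    apply Rmult_le_compat_l with (r := exp u) in H; [|lra].
    rewrite Rinv_r in H by lra. lra. }
  assert (h3 : (r - 1) * (exp u * (1 - u)) <= (r - 1) * 1) by (apply Rmult_le_compat_l; lra).
  nra.
Qed.

Lemma ln_div' a b : 0 < a -> 0 < b -> ln (a / b) = ln a - ln b.
Proof. intros. unfold Rdiv. rewrite ln_mult, ln_Rinv; try lra. apply Rinv_0_lt_compat; lra. Qed.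

Lemma suff p x : p >= 3/5 -> 0 < x ->
     Rpower (sinh x / x) (2 * p) + Rpower (tanh x / x) p >
     Rpower (x / sinh x) (2 * p) + Rpower (x / tanh x) p /\
     Rpower (x / sinh x) (2 * p) + Rpower (x / tanh x) p > 2.
Proof.
  intros Hp Hx.
  pose proof (sinh_pos x Hx) as Hs. pose proof (cosh_pos x) as Hc.
  assert (T1 : x / tanh x = x * cosh x / sinh x) by (unfold tanh; field; lra).
  assert (T2 : tanh x / x = sinh x / (x * cosh x)) by (unfold tanh; field; lra).
  set (u1 := 6/5 * (ln x - ln (sinh x))). set (u2 := 3/5 * (ln x + ln (cosh x) - ln (sinh x))).
  set (r := 5 * p / 3).
  assert (Hr : 1 <= r) by (unfold r; lra).
  assert (R1 : Rpower (x / sinh x) (2 * p) = exp (r * u1)).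
  { unfold Rpower. rewrite ln_div' by lra. f_equal. unfold r, u1. field. }
  assert (R2 : Rpower (x / tanh x) p = exp (r * u2)).
  { unfold Rpower. rewrite T1. rewrite ln_div'. rewrite ln_mult. f_equal. unfold r, u2. field.
    all: first [lra | apply Rmult_lt_0_compat; lra]. }
  assert (R3 : Rpower (sinh x / x) (2 * p) = / exp (r * u1)).
  { unfold Rpower. rewrite <- exp_Ropp. rewrite ln_div' by lra. f_equal. unfold r, u1. field. }
  assert (R4 : Rpower (tanh x / x) p = / exp (r * u2)).
  { unfold Rpower. rewrite <- exp_Ropp. rewrite T2. rewrite ln_div'. rewrite ln_mult. f_equal. unfold r, u2. field.
    all: first [lra | apply Rmult_lt_0_compat; lra]. }
  rewrite R1, R2, R3, R4.
  pose proof (F_pos x Hx) as HF. unfold F, a1, a2 in HF. fold u1 u2 in HF.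
  pose proof (bern r u1 Hr). pose proof (bern r u2 Hr).
  pose proof (exp_pos (r * u1)). pose proof (exp_pos (r * u2)).
  split.
  - assert (Hneg : u1 + u2 < 0).
    { pose proof (P1 x Hx) as HP. apply ln_increasing in HP.
      + rewrite ln_mult, !ln_pow in HP by (try apply pow_lt; lra). simpl INR in HP.
        unfold u1, u2. lra.
      + apply Rmult_lt_0_compat. apply pow_lt; lra. lra. }
    assert (Huv : exp (r * u1) * exp (r * u2) < 1).
    { rewrite <- exp_plus, <- exp_0. apply exp_increasing. nra. }
    set (U := exp (r * u1)) in *. set (V := exp (r * u2)) in *.
    assert (/U + /V - (U + V) = (U + V) * (1 - U * V) / (U * V)) by (field; lra).
    assert (0 < (U + V) * (1 - U * V) / (U * V)).
    { apply Rmult_lt_0_compat. apply Rmult_lt_0_compat; lra. apply Rinv_0_lt_compat; nra. }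
    lra.
  - nra.
Qed.
Lemma rp_forms p x : 0 < x ->
  Rpower (x / sinh x) (2 * p) = exp (2 * p * (ln x - ln (sinh x))) /\
  Rpower (x / tanh x) p = exp (p * (ln x + ln (cosh x) - ln (sinh x))) /\
  Rpower (sinh x / x) (2 * p) = / exp (2 * p * (ln x - ln (sinh x))) /\
  Rpower (tanh x / x) p = / exp (p * (ln x + ln (cosh x) - ln (sinh x))).
Proof.
  intros Hx. pose proof (sinh_pos x Hx) as Hs. pose proof (cosh_pos x) as Hc.
  assert (T1 : x / tanh x = x * cosh x / sinh x) by (unfold tanh; field; lra).
  assert (T2 : tanh x / x = sinh x / (x * cosh x)) by (unfold tanh; field; lra).
  unfold Rpower. rewrite T1, T2. rewrite <- !exp_Ropp.
  rewrite !ln_div'; try rewrite !ln_mult; try (first [lra | apply Rmult_lt_0_compat; lra]).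
  repeat split; f_equal; ring.
Qed.

Lemma exp_mul_lt1 a b : a + b < 0 -> exp a * exp b < 1.
Proof. intros. rewrite <- exp_plus, <- exp_0. apply exp_increasing. lra. Qed.

Lemma key_neg x : 0 < x -> 3 * ln x + ln (cosh x) - 3 * ln (sinh x) < 0.
Proof.
  intros Hx. pose proof (sinh_pos x Hx). pose proof (cosh_pos x).
  pose proof (P1 x Hx) as HP. apply ln_increasing in HP.
  + rewrite ln_mult, !ln_pow in HP by (try apply pow_lt; lra). simpl INR in HP. lra.
  + apply Rmult_lt_0_compat. apply pow_lt; lra. lra.
Qed.

Lemma h_mono v U : 0 <= v <= U -> v - v^2/2 + v^3/3 <= U - U^2/2 + U^3/3.
Proof.
  intros H.
  replace (U - U^2/2 + U^3/3 - (v - v^2/2 + v^3/3)) with ((U - v) * (1 - (U + v)/2 + (U^2 + U*v + v^2)/3)) by field.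
  enough (0 <= (U - v) * (1 - (U + v)/2 + (U^2 + U*v + v^2)/3)) by lra.
  apply Rmult_le_pos. lra. nra.
Qed.

Lemma nec_small p : 0 < p < 3/5 ->
  exists x, 0 < x /\ Rpower (x / sinh x) (2 * p) + Rpower (x / tanh x) p <= 2.
Proof.
  intros Hp. set (y := (3/5 - p)/2).
  assert (Hy : 0 < y <= 3/10) by (unfold y; lra).
  exists (sqrt y).
  set (x := sqrt y).
  assert (Hx : 0 < x) by (apply sqrt_lt_R0; lra).
  assert (Hxy : x^2 = y) by (unfold x; apply pow2_sqrt; lra).
  assert (Hx1 : x <= 1) by nra.
  split; auto.
  destruct (rp_forms p x Hx) as [R1 [R2 _]]. rewrite R1, R2.
  pose proof (sinh_pos x Hx) as Hs. pose proof (cosh_pos x) as Hc. pose proof (cosh_ge1 x) as Hc1.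
  pose proof (sinh_lo x Hx) as Slo. pose proof (sinh_up x ltac:(lra)) as Sup.
  pose proof (cosh_up x ltac:(lra)) as Cup. pose proof (B_pos x Hx) as HB.
  set (s := sinh x) in *. set (c := cosh x) in *.
  assert (X3 : x^3 = x * y) by (rewrite <- Hxy; ring).
  assert (X5 : x^5 = x * y^2) by (rewrite <- Hxy; ring).
  assert (X4 : x^4 = y^2) by (rewrite <- Hxy; ring).
  assert (X6 : x^6 = y^3) by (rewrite <- Hxy; ring).
  rewrite X3, X5 in Slo, Sup. rewrite Hxy, X4, X6 in Cup.
  set (T := y/6 + y^2/120).
  set (t := s / x - 1).
  assert (Q : s = x * (1 + t)) by (unfold t; field; lra).
  assert (Ht1 : T <= t).
  { rewrite Q in Slo. unfold T.
    assert (0 < x * (t - (y/6 + y^2/120))) by nra.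
    apply Rlt_le. apply Rminus_gt_0_lt. eapply Rmult_lt_reg_l. exact Hx. lra. }
  assert (Ht2 : t <= y/6 + y^2/60).
  { rewrite Q in Sup.
    assert (0 <= x * ((y/6 + y^2/60) - t)) by nra.
    apply Rminus_le. apply Rmult_le_reg_l with x. exact Hx. nra. }
  assert (HT0 : 0 <= T) by (unfold T; nra).
  set (a := ln s - ln x).
  assert (Ha : a = ln (1 + t)).
  { unfold a, t. replace (1 + (s / x - 1)) with (s / x) by ring. rewrite ln_div'; lra. }
  assert (Halo : T - T^2/2 <= a).
  { rewrite Ha. eapply Rle_trans. apply ln_lo. lra. apply ln_le; lra. }
  assert (Hahi : a <= y/6 + y^2/60).
  { rewrite Ha. pose proof (ln_le_lin (1 + t) ltac:(lra)). lra. }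
  set (U := y/2 + y^2/24 + y^3/360).
  assert (HlnC : ln c <= U - U^2/2 + U^3/3).
  { replace c with (1 + (c - 1)) by ring.
    eapply Rle_trans. apply ln_up. lra.
    apply h_mono. unfold U; lra. }
  set (b := ln x + ln c - ln s).
  assert (Hb0 : 0 <= b).
  { unfold b. rewrite <- ln_mult by lra. assert (ln s <= ln (x * c)) by (apply ln_le; lra). lra. }
  assert (Hb1 : b <= y/3 - 7*y^2/90 + 7*y^3/100).
  { assert (b <= (U - U^2/2 + U^3/3) - (T - T^2/2)) by (unfold b, a in *; lra).
    unfold U, T in H. nra. }
  assert (Hb2 : b <= y/3) by nra.
  assert (Ha2 : a^2 <= y^2/36 + y^3/150).
  { assert (0 <= T - T^2/2) by (unfold T; nra). assert (0 <= a) by lra.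
    assert (a^2 <= (y/6 + y^2/60)^2) by (apply pow_incr; lra). nra. }
  assert (Halo' : y/6 - y^2/180 - y^3/500 <= a) by (unfold T in Halo; nra).
  replace (2 * p * (ln x - ln s)) with (- (2 * p * a)) by (unfold a; ring).
  assert (Ha0 : 0 <= a) by (assert (0 <= T - T^2/2) by (unfold T; nra); lra).
  assert (P1' : 0 <= 2 * p * a) by (apply Rmult_le_pos; lra).
  assert (P2' : 0 <= p * b <= 1/10).
  { split. apply Rmult_le_pos; lra.
    assert (p * b <= 1 * (3/10/3)). apply Rmult_le_compat; lra. lra. }
  pose proof (exp_neg_up (2 * p * a) P1') as E1.
  pose proof (exp_small_up (p * b) P2') as E2.
  assert (Hb22 : b^2 <= y^2/9).
  { replace (y^2/9) with ((y/3)^2) by field. apply pow_incr; lra. }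
  assert (Hb33 : b^3 <= y^3/27).
  { replace (y^3/27) with ((y/3)^3) by field. apply pow_incr; lra. }
  assert (Hp2 : 0 <= p^2) by (apply pow_le; lra).
  assert (Hp3 : 0 <= p^3) by (apply pow_le; lra).
  assert (S1 : - (2*p*a) <= - (2*p*(y/6 - y^2/180 - y^3/500))).
  { apply Ropp_le_contravar. apply Rmult_le_compat_l; lra. }
  assert (S2 : (2*p*a)^2/2 <= 2*p^2*(y^2/36 + y^3/150)).
  { replace ((2*p*a)^2/2) with (2*p^2*a^2) by field. apply Rmult_le_compat_l; lra. }
  assert (S3 : p*b <= p*(y/3 - 7*y^2/90 + 7*y^3/100)) by (apply Rmult_le_compat_l; lra).
  assert (S4 : (p*b)^2/2 <= p^2*(y^2/9)/2).
  { replace ((p*b)^2/2) with (p^2*b^2/2) by field. apply Rmult_le_compat_r. lra. apply Rmult_le_compat_l; lra. }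
  assert (S5 : (p*b)^3 <= p^3*(y^3/27)).
  { replace ((p*b)^3) with (p^3 * b^3) by ring. apply Rmult_le_compat_l; lra. }
  assert (Y : p/9 - 1/15 = -2*y/9) by (unfold y; field).
  set (g := 1/250 + 7/100 + p/75 + p^2/27).
  assert (Hg : g - 2/9 < 0) by (unfold g; nra).
  assert (S6 : - (2*p*(y/6 - y^2/180 - y^3/500)) + 2*p^2*(y^2/36 + y^3/150)
      + p*(y/3 - 7*y^2/90 + 7*y^3/100) + p^2*(y^2/9)/2 + p^3*(y^3/27) = p*y^3*(g - 2/9)).
  { replace (p*y^3*(g-2/9)) with (p*y^2*(-2*y/9) + p*y^3*g) by field. rewrite <- Y. unfold g. field. }
  assert (S7 : p*y^3*(g - 2/9) < 0).
  { assert (0 < p*y^3) by (apply Rmult_lt_0_compat; [lra|apply pow_lt; lra]).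
    replace (p*y^3*(g-2/9)) with (- ((p*y^3)*(2/9 - g))) by ring.
    apply Ropp_lt_gt_0_contravar. apply Rmult_lt_0_compat; lra. }
  lra.
Qed.

Lemma nec p : (forall x : R, 0 < x ->
     Rpower (sinh x / x) (2 * p) + Rpower (tanh x / x) p >
     Rpower (x / sinh x) (2 * p) + Rpower (x / tanh x) p /\
     Rpower (x / sinh x) (2 * p) + Rpower (x / tanh x) p > 2) -> p >= 3/5.
Proof.
  intros H. destruct (Rle_lt_dec (3/5) p) as [h|h]. lra.
  exfalso. destruct (Rle_lt_dec p 0) as [h0|h0].
  - destruct (H 1 ltac:(lra)) as [H1 _].
    destruct (rp_forms p 1 ltac:(lra)) as [R1 [R2 [R3 R4]]]. rewrite R1, R2, R3, R4 in H1.
    pose proof (key_neg 1 ltac:(lra)).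
    set (U := exp (2 * p * (ln 1 - ln (sinh 1)))) in *.
    set (V := exp (p * (ln 1 + ln (cosh 1) - ln (sinh 1)))) in *.
    assert (HU : 0 < U) by apply exp_pos. assert (HV : 0 < V) by apply exp_pos.
    assert (1 <= U * V).
    { unfold U, V. rewrite <- exp_plus.
      match goal with |- _ <= exp ?z => pose proof (exp_ineq1_le z) end.
      rewrite ln_1 in *. nra. }
    assert (/U + /V - (U + V) = (U + V) * (1 - U * V) / (U * V)) by (field; lra).
    assert ((U + V) * (1 - U * V) / (U * V) <= 0).
    { unfold Rdiv. apply Rmult_le_0_r. nra. apply Rlt_le, Rinv_0_lt_compat. nra. }
    lra.
  - destruct (nec_small p ltac:(lra)) as [x [Hx Hle]].
    destruct (H x Hx) as [_ H2]. lra.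
Qed.

Theorem corollary4p11 (p : R) :
  (forall x : R, 0 < x ->
     Rpower (sinh x / x) (2 * p) + Rpower (tanh x / x) p >
     Rpower (x / sinh x) (2 * p) + Rpower (x / tanh x) p /\
     Rpower (x / sinh x) (2 * p) + Rpower (x / tanh x) p > 2)
  <-> p >= 3 / 5.
Proof.
  split.
  - apply nec.
  - intros Hp x Hx. apply suff; auto.
Qed.
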